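(* Let $C=(C_{i,j})$ be an $m\times n$ evolutionary stable (ES) configuration with $m,n>2$. Then $n$ is divisible by $3$, $C_{m,j}=1$ for all $1\le j\le n$, and row $m-1$ is the string $101\,101\cdots101$, i.e.\ $C_{m-1,j}=0$ if $j\equiv 2\pmod 3$ and $C_{m-1,j}=1$ otherwise.
   Context: An $m\times n$ configuration is a $0$-$1$ matrix $C=(C_{i,j})$, $1\le i\le m$, $1\le j\le n$; $C_{i,j}=1$ means lot $(i,j)$ is occupied by a house. Row $1$ is the northernmost, row $m$ the southernmost; column $1$ westernmost, column $n$ easternmost. A house at $(i,j)$ is blocked from sunlight if the three lots $(i,j-1)$, $(i,j+1)$, $(i+1,j)$ all lie inside the grid and are all occupied (lots outside the grid never obstruct sunlight). $C$ is permissible if no house is blocked, and maximal if it is permissible and setting any single empty lot to $1$ yields a non-permissible configuration. A maximal configuration is resistant to predators if, for every empty lot, putting a house on it results in that new house being blocked; it is resistant to altruists if, for every empty lot, putting a house on it results in some other (already existing) house being blocked. An ES configuration is a maximal configuration resistant to both predators and altruists. *)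

(* Defs.v *)
From mathcomp Require Import all_boot.
Set Implicit Arguments. Unset Strict Implicit. Unset Printing Implicit Defensive.

(* An m x n configuration: C i j = true means lot (i,j) is occupied.
   Indices are 1-based: rows 1..m (1 = north), columns 1..n (1 = west).
   Values of C outside the grid are irrelevant (all notions below only
   consult lots inside the grid). *)
Definition config := nat -> nat -> bool.

Definition inside (m n i j : nat) : bool := (1 <= i <= m) && (1 <= j <= n).

Definition occ (m n : nat) (C : config) (i j : nat) : bool :=
  inside m n i j && C i j.

Definition blocked (m n : nat) (C : config) (i j : nat) : bool :=
  [&& occ m n C i j, (1 < j) && occ m n C i j.-1, occ m n C i j.+1
    & occ m n C i.+1 j].

Definition permissible (m n : nat) (C : config) : Prop :=
  forall i j, inside m n i j -> C i j -> ~~ blocked m n C i j.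

Definition add_house (C : config) (a b : nat) : config :=
  fun i j => if (i == a) && (j == b) then true else C i j.

Definition maximal (m n : nat) (C : config) : Prop :=
  permissible m n C /\
  forall a b, inside m n a b -> C a b = false ->
    ~ permissible m n (add_house C a b).

Definition resistant_predators (m n : nat) (C : config) : Prop :=
  forall a b, inside m n a b -> C a b = false ->
    blocked m n (add_house C a b) a b.

Definition resistant_altruists (m n : nat) (C : config) : Prop :=
  forall a b, inside m n a b -> C a b = false ->
    exists i j, [/\ inside m n i j, C i j, (i, j) <> (a, b) &
                    blocked m n (add_house C a b) i j].

Definition ES (m n : nat) (C : config) : Prop :=
  [/\ maximal m n C, resistant_predators m n C & resistant_altruists m n C].

(* Main.v *)
Require Import Defs.
From mathcomp Require Import all_boot zify.
Set Implicit Arguments. Unset Strict Implicit. Unset Printing Implicit Defensive.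

Ltac splitb := repeat match goal with | H : is_true (_ && _) |- _ => case/andP: H => ? ? end.

Record Good (m n : nat) (C : config) : Prop := {
  gP1 : forall a b, 1 <= a <= m -> 1 <= b <= n -> C a b = false ->
        [/\ 2 <= b < n, a < m, C a b.-1, C a b.+1 & C a.+1 b] ;
  gP2 : forall i j, 1 <= i -> i < m -> 2 <= j -> j < n -> C i j ->
        ~~ [&& C i j.-1, C i j.+1 & C i.+1 j] ;
  gP3 : forall a b, 1 <= a <= m -> 1 <= b <= n -> C a b = false ->
        [\/ [&& 3 <= b, C a b.-2 & C a.+1 b.-1],
            [&& b.+2 <= n, C a b.+2 & C a.+1 b.+1] |
            [&& 2 <= a, C a.-1 b.-1, C a.-1 b & C a.-1 b.+1] ] }.

Lemma ES_Good m n C : ES m n C -> Good m n C.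
Proof.
case=> [[Hperm _] Hpred Halt]; split.
- move=> a b Ha Hb Hab.
  have Hin : inside m n a b by rewrite /inside Ha Hb.
  move: (Hpred a b Hin Hab).
  rewrite /blocked /occ /add_house /inside !eqxx /=.
  have -> : (b.-1 == b) = false by apply/eqP; lia.
  have -> : (b.+1 == b) = false by apply/eqP; lia.
  have -> : (a.+1 == a) = false by apply/eqP; lia.
  rewrite ?andbF /=.
  move=> H; splitb; split => //; try (apply/andP; split); lia.
- move=> i j Hi Him Hj Hjn Hc.
  have Hin : inside m n i j by rewrite /inside; apply/andP; split; apply/andP; split; lia.
  move: (Hperm i j Hin Hc); rewrite /blocked /occ /inside.
  apply: contra => /and3P [H1 H2 H3].
  rewrite Hc H1 H2 H3 !andbT /=.
  repeat (apply/andP; split); lia.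
- move=> a b Ha Hb Hab.
  have Hin : inside m n a b by rewrite /inside Ha Hb.
  have [i [j [Hij Cij Hne Hbl]]] := Halt a b Hin Hab.
  move: Hbl; rewrite /blocked /occ.
  case/and4P=> /andP [_ h0] /andP [h1 /andP [i2 h2]] /andP [i3 h3] /andP [i4 h4].
  move: i2 i3 i4; rewrite /inside => i2 i3 i4.
  case E1: ((i == a) && (j.-1 == b)).
  + case/andP: E1 => /eqP Ei /eqP Ej; subst i.
    have Ej' : j = b.+1 by lia.
    subst j.
    move: h3 h4; rewrite /add_house.
    have -> : (b.+2 == b) = false by apply/eqP; lia.
    have -> : (a.+1 == a) = false by apply/eqP; lia.
    rewrite ?andbF /= => h3 h4.
    apply: Or32; rewrite h3 h4 andbT; splitb; lia.
  case E2: ((i == a) && (j.+1 == b)).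
  + case/andP: E2 => /eqP Ei /eqP Ej; subst i b.
    move: h2 h4; rewrite /add_house.
    have -> : (j.-1 == j.+1) = false by apply/eqP; lia.
    have -> : (a.+1 == a) = false by apply/eqP; lia.
    rewrite ?andbF /= => h2 h4.
    apply: Or31; rewrite /= h2 h4 andbT; lia.
  case E3: ((i.+1 == a) && (j == b)).
  + case/andP: E3 => /eqP Ei /eqP Ej; subst a b.
    move: h2 h3; rewrite /add_house.
    have -> : (i == i.+1) = false by apply/eqP; lia.
    rewrite /= => h2 h3.
    apply: Or33; rewrite /= h2 h3 Cij !andbT; splitb; lia.
  exfalso.
  have Hin' : inside m n i j by [].
  move: (Hperm i j Hin' Cij); rewrite /blocked /occ.
  move: h0 h2 h3 h4; rewrite /add_house E1 E2 E3.
  case: ifP => [/andP [/eqP Ei /eqP Ej] | _].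
  { by exfalso; apply: Hne; rewrite Ei Ej. }
  move=> _ h2 h3 h4.
  rewrite Hij Cij h1 h2 h3 h4 /=.
  by rewrite /inside i2 i3 i4.
Qed.

Definition Z (C : config) (r c : nat) : nat := count (fun j => ~~ C r j) (iota 1 c).

Lemma Z0 C r : Z C r 0 = 0.
Proof. by []. Qed.

Lemma ZS C r c : Z C r c.+1 = Z C r c + ~~ C r c.+1.
Proof. by rewrite /Z -[c.+1]addn1 iotaD count_cat /= addn0 add1n addn1. Qed.

Lemma ZSo C r c : C r c.+1 = true -> Z C r c.+1 = Z C r c.
Proof. by move=> H; rewrite ZS H addn0. Qed.

Lemma ZSe C r c : C r c.+1 = false -> Z C r c.+1 = (Z C r c).+1.
Proof. by move=> H; rewrite ZS H addn1. Qed.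

Lemma Z_mono C r a b : a <= b -> Z C r a <= Z C r b.
Proof.
elim: b => [|b IH]; first by rewrite leqn0 => /eqP ->.
rewrite leq_eqVlt => /orP [/eqP -> //|]; rewrite ltnS => /IH H.
rewrite ZS; lia.
Qed.

Lemma Z_le C r c : Z C r c <= c.
Proof. elim: c => [//|c IH]; rewrite ZS; case: (C r c.+1) => /=; lia. Qed.

Lemma Z_occ C r a j b : a < j <= b -> Z C r a = Z C r b -> C r j = true.
Proof.
move=> /andP [H1 H2] E.
case: j H1 H2 => [//|j] H1 H2.
have h1 : Z C r a <= Z C r j by apply: Z_mono; lia.
have h2 := Z_mono C r H2.
move: h1 h2; rewrite ZS; case: (C r j.+1) => //=; lia.
Qed.

Lemma Z_all C r c : (forall j, 1 <= j <= c -> C r j = true) -> Z C r c = 0.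
Proof.
elim: c => [//|c IH] H.
rewrite ZSo ?H ?IH //; last by lia.
move=> j Hj; apply: H; lia.
Qed.

Lemma lastzero C r c :
  (forall j, 1 <= j <= c -> C r j = true) \/
  (exists p, [/\ 1 <= p <= c, C r p = false & Z C r p = Z C r c]).
Proof.
elim: c => [|c [IH|[p [Hp Cp Zp]]]].
- by left=> j; lia.
- case E: (C r c.+1).
  + left=> j Hj; case: (ltngtP j c.+1) => Hjc; [apply: IH; lia | lia | by rewrite Hjc].
  + right; exists c.+1; split=> //; lia.
- case E: (C r c.+1).
  + right; exists p; split=> //; first lia. by rewrite ZSo.
  + right; exists c.+1; split=> //; lia.
Qed.


Lemma col1 m n C (G : Good m n C) a : 1 <= a <= m -> 1 <= n -> C a 1 = true.
Proof. move=> Ha Hn; case E: (C a 1) => //; have [] := gP1 G Ha _ E; lia. Qed.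

Lemma coln m n C (G : Good m n C) a : 1 <= a <= m -> 1 <= n -> C a n = true.
Proof. move=> Ha Hn; case E: (C a n) => //; have [] := gP1 G Ha _ E; lia. Qed.

Lemma rowm m n C (G : Good m n C) b : 1 <= m -> 1 <= b <= n -> C m b = true.
Proof. move=> Hm Hb; case E: (C m b) => //; have [] := gP1 G _ Hb E; lia. Qed.

Lemma abv m n C (G : Good m n C) a b : 1 <= a -> a < m -> 1 <= b <= n ->
  C a.+1 b = false -> C a b = true.
Proof.
move=> Ha Ham Hb E; case E': (C a b) => //.
have Ha' : 1 <= a <= m by lia.
have [_ _ _ _ H] := gP1 G Ha' Hb E'. by rewrite H in E.
Qed.

Lemma LB m n C (G : Good m n C) i : 1 <= i -> i < m -> forall c, 1 <= c <= n ->
  (C i c = false -> Z C i.+1 c + C i.+1 2 <= Z C i c) /\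
  (C i.+1 c = false -> Z C i.+1 c + C i.+1 2 <= (Z C i c).+1).
Proof.
move=> Hi Him c.
elim: c {-2}c (leqnn c) => [|N IHN] c Hc Hcn; first lia.
have IH : forall c', c' < c -> 1 <= c' <= n ->
   (C i c' = false -> Z C i.+1 c' + C i.+1 2 <= Z C i c') /\
   (C i.+1 c' = false -> Z C i.+1 c' + C i.+1 2 <= (Z C i c').+1).
  move=> c' Hc' Hc'n; apply: IHN => //; lia.
have Hi' : 1 <= i <= m by lia.
have Hi1 : 1 <= i.+1 <= m by lia.
split.
- move=> E.
  have [Hc2 _ HCl HCr HCb] := gP1 G Hi' Hcn E.
  case: c Hc Hcn IH E Hc2 HCl HCr HCb => [//|c] Hc Hcn IH E Hc2 HCl HCr HCb.
  rewrite (ZSe E) (ZSo HCb).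
  case: (lastzero C i.+1 c) => [Hall|[p [Hp Cp Zp]]].
  + rewrite Z_all //; case: (C i.+1 2); lia.
  + have Hpc : p < c.+1 by lia.
    have Hpn : 1 <= p <= n by lia.
    have [_ H] := IH p Hpc Hpn.
    have := H Cp.
    have Hm : Z C i p <= Z C i c by apply: Z_mono; lia.
    rewrite -Zp; lia.
- move=> E.
  have [Hc2 _ HCl HCr HCb] := gP1 G Hi1 Hcn E.
  have Ci : C i c = true by apply: (abv G) => //; lia.
  case: c Hc Hcn IH E Hc2 HCl HCr HCb Ci => [//|[//|[|c]]] Hc Hcn IH E Hc2 HCl HCr HCb Ci.
  + have C1 : C i.+1 1 = true by apply: (col1 G); lia.
    rewrite (ZSe E) (ZSo C1) Z0 E; lia.
  + rewrite (ZSe E) (ZSo HCl).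
    case E2: (C i c.+2).
    * have H2 : 2 <= c.+2 by [].
      have H3 : c.+2 < n by lia.
      have := gP2 G Hi Him H2 H3 E2; rewrite /= Ci HCl !andbT.
      case E1: (C i c.+1) => // _.
      have Hc1 : 1 <= c.+1 <= n by lia.
      have [_ _ _ _ HB] := gP1 G Hi' Hc1 E1.
      have Hlt : c.+1 < c.+3 by [].
      have [H _] := IH c.+1 Hlt Hc1.
      have := H E1.
      have Hm : Z C i c.+1 <= Z C i c.+3 by apply: Z_mono; lia.
      lia.
    * have Hc1 : 1 <= c.+2 <= n by lia.
      have Hlt : c.+2 < c.+3 by [].
      have [H _] := IH c.+2 Hlt Hc1.
      have := H E2; rewrite (ZSo HCl) (ZSo Ci); lia.
Qed.


Ltac clearC C := repeat match goal with
  | H : is_true (C _ _) |- _ => clear H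
  | H : C _ _ = _ |- _ => clear H
  | H : is_true (~~ C _ _) |- _ => clear H
  end.
Ltac flia C := clearC C; lia.

Definition CondL (n : nat) (C : config) (r : nat) := forall c, c <= n -> 3 * Z C r c <= c.+1.

Lemma CondL_small m n C (G : Good m n C) r c : 1 <= n -> 1 <= r <= m -> c <= 3 -> c <= n ->
  3 * Z C r c <= c.+1.
Proof.
move=> Hn Hr Hc3 Hcn.
have C1 : C r 1 = true by apply: (col1 G); lia.
case: c Hc3 Hcn => [|[|[|[|c]]]] // Hc3 Hcn.
- by rewrite (ZSo C1).
- rewrite ZS (ZSo C1) Z0; case: (C r 2); lia.
- rewrite ZS ZS (ZSo C1) Z0.
  case E3: (C r 3); first by case: (C r 2); lia.
  have H3 : 1 <= 3 <= n by lia.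
  have [_ _ H2 _ _] := gP1 G Hr H3 E3.
  by rewrite /= in H2; rewrite H2.
Qed.

Lemma CondL_step m n C (G : Good m n C) i : 1 <= n -> 1 <= i -> i < m ->
  (2 <= i -> CondL n C i /\ CondL n C i.-1) -> CondL n C i.+1.
Proof.
move=> Hn Hi Him HC c.
elim: c {-2}c (leqnn c) => [|N IHN] c Hc Hcn.
  have -> : c = 0 by flia C. by rewrite Z0.
have IH : forall c', c' < c -> 3 * Z C i.+1 c' <= c'.+1.
  move=> c' Hc'; apply: IHN; flia C.
have Hi1 : 1 <= i.+1 <= m by flia C.
have Hi' : 1 <= i <= m by flia C.
case: (leqP c 3) => Hc3; first exact: (CondL_small G Hn Hi1 Hc3 Hcn).
case: c Hc Hcn IH Hc3 => [|[|[|[|c]]]] // Hc Hcn IH _.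
case: (leqP (3 * Z C i.+1 c.+4) c.+4.+1) => // Hviol.
exfalso.
have IH3 := IH c.+3 (ltnSn _).
have IH2 : 3 * Z C i.+1 c.+2 <= c.+3 by apply: IH; flia C.
have IH1 : 3 * Z C i.+1 c.+1 <= c.+2 by apply: IH; flia C.
case E4: (C i.+1 c.+4).
  by move: Hviol; rewrite (ZSo E4); flia C.
have Hc4n : 1 <= c.+4 <= n by flia C.
have [Hc4 _ D3 D5 _] := gP1 G Hi1 Hc4n E4.
rewrite (ZSe E4) (ZSo D3) in Hviol.
have E2 : C i.+1 c.+2 = false.
  case E2: (C i.+1 c.+2) => //.
  by move: Hviol; rewrite (ZSo E2); flia C.
have Hc2n : 1 <= c.+2 <= n by flia C.
have [_ _ _ _ _] := gP1 G Hi1 Hc2n E2.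
have R2 : C i c.+2 = true by apply: (abv G) => //; flia C.
have R4 : C i c.+4 = true by apply: (abv G) => //; flia C.
have R3 : C i c.+3 = false.
  case R3: (C i c.+3) => //.
  have H2 : 2 <= c.+3 by [].
  have H3 : c.+3 < n by flia C.
  by have := gP2 G Hi Him H2 H3 R3; rewrite /= R2 R4 D3.
have Hc3n : 1 <= c.+3 <= n by flia C.
case: (gP3 G Hi' Hc3n R3) => /=.
- by rewrite E2 !andbF.
- by rewrite E4 !andbF.
case/and4P => Hi2 U2 U3 U4.
have [CR CU] := HC Hi2.
clear IH3 IH1 IHN IH.
case: i Hi Him HC Hi2 Hi1 Hi' CR CU R2 R3 R4 E2 E4 D3 D5 Hviol IH2 U2 U3 U4 => [//|j] Hj Hjm HC Hj2 Hj1 Hj' CR CU R2 R3 R4 E2 E4 D3 D5 Hviol IH2 U2 U3 U4.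
rewrite /= in U2 U3 U4 CU.
have Hj0 : 1 <= j by flia C.
have Hjm' : j < m by flia C.
have U1 : C j c.+1 = false.
  case U1: (C j c.+1) => //.
  have H2 : 2 <= c.+2 by [].
  have H3 : c.+2 < n by flia C.
  by have := gP2 G Hj0 Hjm' H2 H3 U2; rewrite /= U1 U3 R2.
have [LBR _] := LB G Hj Hjm Hc3n.
have L1 := LBR R3.
have Hc3n' : c.+3 <= n by flia C.
have CR3 := CR c.+3 Hc3n'.
have Hc1n : 1 <= c.+1 <= n by flia C.
have [LBU _] := LB G Hj0 Hjm' Hc1n.
have L2 := LBU U1.
have Hc1n' : c.+1 <= n by flia C.
have CU1 := CU c.+1 Hc1n'.
move: L1 CR3 L2 CU1 Hviol IH2.
rewrite (ZSo D3) (ZSe R3) (ZSo R2).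
have Hj1' : 1 <= j.+1 <= m by flia C.
have Hc2' : 1 <= 2 <= n by flia C.
case ER2: (C j.+1 2).
- case ED2: (C j.+2 2); flia C.
- have [_ _ _ _ HD2] := gP1 G Hj1' Hc2' ER2.
  rewrite HD2; flia C.
Qed.


Lemma row2_no2 m n C (G : Good m n C) p : 2 < m -> 1 <= p -> p.+2 <= n ->
  C 2 p = false -> C 2 p.+2 = false -> False.
Proof.
move=> Hm Hp Hpn E0 E2.
have H2m : 1 <= 2 <= m by flia C.
have Hpn' : 1 <= p <= n by flia C.
have [Hp2 _ _ R1 _] := gP1 G H2m Hpn' E0.
have Hp2n : 1 <= p.+2 <= n by flia C.
have [Hp2' _ _ _ _] := gP1 G H2m Hp2n E2.
have T0 : C 1 p = true by apply: (abv G) => //; flia C.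
have T2 : C 1 p.+2 = true by apply: (abv G) => //; flia C.
have H11 : 1 <= 1 <= m by flia C.
have Hp1n : 1 <= p.+1 <= n by flia C.
case T1: (C 1 p.+1).
- have H1 : 1 <= 1 by []. have H1m : 1 < m by flia C.
  have H2 : 2 <= p.+1 by flia C. have H3 : p.+1 < n by flia C.
  by have := gP2 G H1 H1m H2 H3 T1; rewrite /= T0 T2 R1.
- case: (gP3 G H11 Hp1n T1) => /=.
  + by rewrite E0 !andbF.
  + by rewrite E2 !andbF.
  + by [].
Qed.

Lemma row2_3 m n C (G : Good m n C) : 2 < m -> 2 < n -> C 2 3 = true.
Proof.
move=> Hm Hn; case E3: (C 2 3) => //.
have H2m : 1 <= 2 <= m by flia C.
have H3n : 1 <= 3 <= n by flia C.
have [_ _ R2 _ _] := gP1 G H2m H3n E3.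
have T3 : C 1 3 = true by apply: (abv G) => //; flia C.
have T1 : C 1 1 = true by apply: (col1 G); flia C.
have H11 : 1 <= 1 <= m by flia C.
have H2n : 1 <= 2 <= n by flia C.
case T2: (C 1 2).
- have H1 : 1 <= 1 by []. have H1m : 1 < m by flia C.
  have H2 : 2 <= 2 by []. have H3 : 2 < n by flia C.
  by have := gP2 G H1 H1m H2 H3 T2; rewrite /= T1 T3 R2.
- case: (gP3 G H11 H2n T2) => /=.
  + by [].
  + by rewrite E3 !andbF.
  + by [].
Qed.

Lemma row12_between m n C (G : Good m n C) q p : 2 < m -> 1 <= q -> q < p -> p <= n ->
  C 1 q = false -> C 1 p = false -> Z C 2 q = Z C 2 p -> False.
Proof.
move=> Hm Hq Hqp Hpn Eq Ep HZ.
have H11 : 1 <= 1 <= m by flia C.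
have Hqn : 1 <= q <= n by flia C.
have Hpn' : 1 <= p <= n by flia C.
have [Hq2 _ Lq Rq Bq] := gP1 G H11 Hqn Eq.
have [Hp2 _ Lp Rp Bp] := gP1 G H11 Hpn' Ep.
have Hqp1 : q.+1 < p.
  case: (ltngtP q.+1 p) => // H; first flia C. by rewrite H Ep in Rq.
have A j : q < j <= p -> C 2 j = true.
  move=> Hj; exact: (Z_occ Hj HZ).
have A1 : C 2 q.+1 = true by apply: A; flia C.
have A2 : C 2 q.+2 = true by apply: A; flia C.
have H2 : 1 <= 2 by []. have H2m : 2 < m by [].
have H2m' : 1 <= 2 <= m by flia C.
have Hq1a : 2 <= q.+1 by flia C. have Hq1b : q.+1 < n by flia C.
have Z1 : C 3 q.+1 = false.
  have := gP2 G H2 H2m Hq1a Hq1b A1; rewrite /= Bq A2.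
  by case: (C 3 q.+1).
have H3m : 1 <= 3 <= m by flia C.
have Hq1n : 1 <= q.+1 <= n by flia C.
have [_ _ Z0 Z2 _] := gP1 G H3m Hq1n Z1.
have Hpq : p = q.+2.
  case: (ltngtP p q.+2) => // H; first flia C.
  have A3 : C 2 q.+3 = true by apply: A; flia C.
  have Hq2a : 2 <= q.+2 by flia C. have Hq2b : q.+2 < n by flia C.
  by have := gP2 G H2 H2m Hq2a Hq2b A2; rewrite /= A1 A3 Z2.
subst p.
have Hq2b : q < n by flia C.
have Hq2' : 2 <= q by flia C.
have Wq : C 2 q.-1 = false.
  have := gP2 G H2 H2m Hq2' Hq2b Bq; rewrite /= A1 Z0 andbT.
  by case: (C 2 q.-1).
case: (gP3 G H11 Hqn Eq) => /=.
- by rewrite Wq !andbF.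
- by rewrite Ep !andbF.
- by [].
Qed.


Lemma LB1 m n C (G : Good m n C) : 2 < m -> 2 < n -> forall p, 1 <= p <= n ->
  C 1 p = false -> Z C 1 p + ~~ C 2 2 <= (Z C 2 p).+1.
Proof.
move=> Hm Hn p.
elim: p {-2}p (leqnn p) => [|N IHN] p Hp Hpn Ep; first flia C.
have H11 : 1 <= 1 <= m by flia C.
have [Hp2 _ _ _ _] := gP1 G H11 Hpn Ep.
case: p Hp Hpn Ep Hp2 => [//|p] Hp Hpn Ep Hp2.
rewrite (ZSe Ep).
case: (lastzero C 1 p) => [Hall|[q [Hq Cq Zq]]].
- rewrite Z_all //.
  case E22: (C 2 2) => /=; first flia C.
  have H21 : C 2 1 = true by apply: (col1 G); flia C.
  have HZ2 : Z C 2 2 = 1 by rewrite (ZSe E22) (ZSo H21) Z0.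
  have := Z_mono C 2 (_ : 2 <= p.+1). rewrite HZ2. move=> H; have := H (_ : 2 <= p.+1); flia C.
- have Hqn : 1 <= q <= n by flia C.
  have Hq' : q <= N by flia C.
  have IHq := IHN q Hq' Hqn Cq.
  have Hqp : q < p.+1 by flia C.
  have Hp1 : 1 <= q by flia C.
  have Hpn' : p.+1 <= n by flia C.
  have Hne := row12_between G Hm Hp1 Hqp Hpn' Cq Ep.
  have Hmo := Z_mono C 2 (ltnW Hqp).
  have Hlt : Z C 2 q < Z C 2 p.+1.
    rewrite ltn_neqAle Hmo andbT; apply/eqP => H; exact: Hne H.
  rewrite -Zq; move: IHq Hlt; case: (C 2 2) => /=; flia C.
Qed.

Lemma UB2 m n C (G : Good m n C) : 2 < m -> 2 < n -> C 2 2 = true ->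
  forall c, c <= n -> 3 * Z C 2 c <= c.-1.
Proof.
move=> Hm Hn E22 c.
elim: c {-2}c (leqnn c) => [|N IHN] c Hc Hcn; first by have -> : c = 0 by flia C.
have H21 : C 2 1 = true by apply: (col1 G); flia C.
have H23 : C 2 3 = true by apply: (row2_3 G).
case: (leqP c 3) => Hc3.
  have -> : Z C 2 c = 0.
    apply: Z_all => j Hj.
    by have [->|[->|->]] : j = 1 \/ j = 2 \/ j = 3 by flia C.
  by rewrite muln0.
case: c Hc Hcn Hc3 => [|[|[|[|c]]]] // Hc Hcn _.
have H2m : 1 <= 2 <= m by flia C.
case E4: (C 2 c.+4).
- rewrite (ZSo E4); have := IHN c.+3 (_ : c.+3 <= N) (_ : c.+3 <= n); flia C.
- have Hc4n : 1 <= c.+4 <= n by flia C.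
  have [_ _ L3 _ _] := gP1 G H2m Hc4n E4.
  have E2 : C 2 c.+2 = true.
    case E2: (C 2 c.+2) => //.
    have Hc1 : 1 <= c.+2 by []. have Hc2 : c.+2.+2 <= n by flia C.
    by exfalso; apply: (row2_no2 G Hm Hc1 Hc2 E2 E4).
  rewrite (ZSe E4) (ZSo L3) (ZSo E2).
  have Hc1N : c.+1 <= N by flia C. have Hc1n : c.+1 <= n by flia C.
  have := IHN c.+1 Hc1N Hc1n; flia C.
Qed.


Lemma CondL_row1 m n C (G : Good m n C) : 2 < m -> 2 < n -> CondL n C 1.
Proof.
move=> Hm Hn.
have Hn1 : 1 <= n by flia C.
have Hm1 : 1 < m by flia C.
have CR2 : CondL n C 2.
  apply: (CondL_step G Hn1 (isT : 0 < 1) Hm1) => //.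
move=> c.
elim: c {-2}c (leqnn c) => [|N IHN] c Hc Hcn.
  have -> : c = 0 by flia C. by rewrite Z0.
have IH : forall c', c' < c -> 3 * Z C 1 c' <= c'.+1.
  move=> c' Hc'; apply: IHN; flia C.
have H11 : 1 <= 1 <= m by flia C.
have H21 : 1 <= 2 <= m by flia C.
have H31 : 1 <= 3 <= m by flia C.
case: (leqP c 3) => Hc3; first exact: (CondL_small G Hn1 H11 Hc3 Hcn).
case: c Hc Hcn IH Hc3 => [|[|[|[|c]]]] // Hc Hcn IH _.
case: (leqP (3 * Z C 1 c.+4) c.+4.+1) => // Hviol.
exfalso.
have IH3 := IH c.+3 (ltnSn _).
have IH2 : 3 * Z C 1 c.+2 <= c.+3 by apply: IH; flia C.
case E4: (C 1 c.+4).
  by move: Hviol; rewrite (ZSo E4); flia C.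
have Hc4n : 1 <= c.+4 <= n by flia C.
have [Hc4 _ D3 D5 B4] := gP1 G H11 Hc4n E4.
rewrite (ZSe E4) (ZSo D3) in Hviol.
have E2 : C 1 c.+2 = false.
  case E2: (C 1 c.+2) => //.
  have IH1 : 3 * Z C 1 c.+1 <= c.+2 by apply: IH; flia C.
  by move: Hviol; rewrite (ZSo E2); flia C.
have Hc2n : 1 <= c.+2 <= n by flia C.
have [_ _ _ _ B2] := gP1 G H11 Hc2n E2.
have R3 : C 2 c.+3 = false.
  case R3: (C 2 c.+3) => //.
  have R1 : C 2 c.+1 = true.
    case: (gP3 G H11 Hc2n E2) => /=.
    - by case/and3P.
    - by rewrite E4 !andbF.
    - by [].
  have H2 : 1 <= 2 by []. have H2m : 2 < m by [].
  have Ha : 2 <= c.+2 by []. have Hb : c.+2 < n by flia C.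
  have Z2 : C 3 c.+2 = false.
    have := gP2 G H2 H2m Ha Hb B2; rewrite /= R1 R3.
    by case: (C 3 c.+2).
  have Ha' : 2 <= c.+3 by []. have Hb' : c.+3 < n by flia C.
  have Z3 : C 3 c.+3 = false.
    have := gP2 G H2 H2m Ha' Hb' R3; rewrite /= B2 B4.
    by case: (C 3 c.+3).
  have [_ _ _ Z3' _] := gP1 G H31 Hc2n Z2.
  by rewrite Z3 in Z3'.
have L := LB1 G Hm Hn Hc2n E2.
have Hc3n : c.+3 <= n by flia C.
have C3 := CR2 c.+3 Hc3n.
rewrite (ZSe R3) in C3.
case E22: (C 2 2).
- have U := UB2 G Hm Hn E22 Hc3n.
  rewrite (ZSe R3) in U.
  move: L; rewrite E22 /=; flia C.
- move: L; rewrite E22 /=; flia C.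
Qed.

Lemma CondL_all m n C (G : Good m n C) : 2 < m -> 2 < n ->
  forall r, 1 <= r <= m -> CondL n C r.
Proof.
move=> Hm Hn r.
elim: r {-2}r (leqnn r) => [|N IHN] r Hr Hrm; first flia C.
case: r Hr Hrm => [//|[|i]] Hr Hrm; first exact: (CondL_row1 G).
have Hn1 : 1 <= n by flia C.
have Hi : 1 <= i.+1 by []. have Him : i.+1 < m by flia C.
apply: (CondL_step G Hn1 Hi Him) => Hi2; split.
- apply: IHN; flia C.
- apply: IHN; flia C.
Qed.


Lemma win m n C (G : Good m n C) x : x.+1 = m -> 1 <= x -> forall j, 2 <= j -> j < n ->
  C x j -> ~~ (C x j.-1 && C x j.+1).
Proof.
move=> Hx Hx1 j Hj Hjn Cj.
have Hxm : x < m by flia C.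
have := gP2 G Hx1 Hxm Hj Hjn Cj.
have Hjn' : 1 <= j <= n by flia C.
have -> : C x.+1 j = true by rewrite Hx; apply: (rowm G); flia C.
by rewrite andbT.
Qed.

Lemma Z3 C r c : Z C r c.+3 = Z C r c + ~~ C r c.+1 + ~~ C r c.+2 + ~~ C r c.+3.
Proof. by rewrite !ZS. Qed.

Lemma F1 m n C (G : Good m n C) x : x.+1 = m -> 1 <= x -> forall c, c <= n ->
  c <= 3 * Z C x c + 2.
Proof.
move=> Hx Hx1 c.
elim: c {-2}c (leqnn c) => [|N IHN] c Hc Hcn; first flia C.
case: (leqP c 2) => Hc2; first flia C.
case: c Hc Hcn Hc2 => [|[|[|c]]] // Hc Hcn _.
have IH : c <= 3 * Z C x c + 2 by apply: IHN; flia C.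
have Hw := win G Hx Hx1 (_ : 2 <= c.+2) (_ : c.+2 < n).
rewrite Z3.
case E1: (C x c.+1); case E2: (C x c.+2); case E3: (C x c.+3) => /=; try flia C.
have H2 : 2 <= c.+2 by []. have H3 : c.+2 < n by flia C.
by have := win G Hx Hx1 H2 H3 E2; rewrite /= E1 E3.
Qed.

Lemma F2 m n C (G : Good m n C) x : x.+1 = m -> 1 <= x -> C x 2 = false ->
  forall c, 2 <= c <= n -> c <= 3 * Z C x c + 1.
Proof.
move=> Hx Hx1 E2 c.
have Hx' : 1 <= x <= m by flia C.
elim: c {-2}c (leqnn c) => [|N IHN] c Hc Hcn; first flia C.
have C1 : C x 1 = true by apply: (col1 G); flia C.
have HZ2 : Z C x 2 = 1 by rewrite (ZSe E2) (ZSo C1) Z0.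
case: (leqP c 4) => Hc4.
  have := Z_mono C x (_ : 2 <= c); rewrite HZ2 => H; have := H (_ : 2 <= c); flia C.
case: c Hc Hcn Hc4 => [|[|[|[|[|c]]]]] // Hc Hcn _.
have IH : c.+2 <= 3 * Z C x c.+2 + 1 by apply: IHN; flia C.
have -> : Z C x c.+4.+1 = Z C x c.+2 + ~~ C x c.+3 + ~~ C x c.+4 + ~~ C x c.+4.+1 by rewrite Z3.
case E3: (C x c.+3); case E4: (C x c.+4); case E5: (C x c.+4.+1) => /=; try flia C.
have H2 : 2 <= c.+4 by []. have H3 : c.+4 < n by flia C.
by have := win G Hx Hx1 H2 H3 E4; rewrite /= E3 E5.
Qed.

Lemma bottom m n C (G : Good m n C) y k : m = y.+3 -> n = k.+3 ->
  (forall r, 1 <= r <= m -> CondL n C r) -> C y.+2 k.+2 = false.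
Proof.
move=> Hm Hn HC.
case EX: (C y.+2 k.+2) => //.
exfalso.
have HX1 : 1 <= y.+2 <= m by flia C.
have HY1 : 1 <= y.+1 <= m by flia C.
have Hk3 : 1 <= k.+3 <= n by flia C.
have Hk2 : 1 <= k.+2 <= n by flia C.
have Xn : C y.+2 k.+3 = true by rewrite -Hn; apply: (coln G); flia C.
have Yn : C y.+1 k.+3 = true by rewrite -Hn; apply: (coln G); flia C.
have Mk : C y.+3 k.+2 = true by rewrite -Hm; apply: (rowm G); flia C.
have EX1 : C y.+2 k.+1 = false.
  have H1 : 1 <= y.+2 by []. have H2 : y.+2 < m by flia C.
  have H3 : 2 <= k.+2 by []. have H4 : k.+2 < n by flia C.
  have := gP2 G H1 H2 H3 H4 EX; rewrite /= Xn Mk !andbT.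
  by case: (C y.+2 k.+1).
have Hk1 : 1 <= k.+1 <= n by flia C.
have [Hk _ _ _ _] := gP1 G HX1 Hk1 EX1.
have Y1 : C y.+1 k.+1 = true by apply: (abv G) => //; flia C.
have EY : C y.+1 k.+2 = false.
  case EY: (C y.+1 k.+2) => //.
  have H1 : 1 <= y.+1 by []. have H2 : y.+1 < m by flia C.
  have H3 : 2 <= k.+2 by []. have H4 : k.+2 < n by flia C.
  by have := gP2 G H1 H2 H3 H4 EY; rewrite /= Y1 Yn EX.
case: (gP3 G HY1 Hk2 EY) => /=.
- by rewrite EX1 !andbF.
- by case/and3P; flia C.
case/and4P => Hy Z1 Z2 Z3'.
have EZ : C y k = false.
  case EZ: (C y k) => //.
  have H1 : 1 <= y by flia C. have H2 : y < m by flia C.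
  have H3 : 2 <= k.+1 by flia C. have H4 : k.+1 < n by flia C.
  by have := gP2 G H1 H2 H3 H4 Z1; rewrite /= EZ Z2 Y1.
have Hyp : 1 <= y.+1 by []. have Hym : y.+1 < m by flia C.
have [LX _] := LB G Hyp Hym Hk2.
have L1 := LX EY.
have Hkn : k.+2 <= n by flia C.
have CY := HC y.+1 HY1 k.+2 Hkn.
have Hy1 : 1 <= y by flia C. have Hym' : y < m by flia C.
have Hkk : 1 <= k <= n by flia C.
have [LY _] := LB G Hy1 Hym' Hkk.
have L2 := LY EZ.
have HZ1 : 1 <= y <= m by flia C.
have Hkn' : k <= n by flia C.
have CZ := HC y HZ1 k Hkn'.
have Hx : y.+2.+1 = m by flia C.
have Hx1 : 1 <= y.+2 by [].
have Hk3' : k.+3 <= n by flia C.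
have FF1 := F1 G Hx Hx1 Hk3'.
move: L1 CY L2 CZ FF1.
rewrite (ZSo Xn) (ZSe EY) (ZSo Y1).
case EX2: (C y.+2 2).
- flia C.
- have H22 : 1 <= 2 <= n by flia C.
  have EY2 : C y.+1 2 = true by apply: (abv G) => //; flia C.
  have Hk3'' : 2 <= k.+3 <= n by flia C.
  have FF2 := F2 G Hx Hx1 EX2 Hk3''.
  move: FF2; rewrite (ZSo Xn) EY2; flia C.
Qed.


Definition refl (n : nat) (C : config) : config := fun i j => C i (n.+1 - j).

Lemma Good_refl m n C : Good m n C -> Good m n (refl n C).
Proof.
move=> G; rewrite /refl; split.
- move=> a b Ha Hb E.
  have Hb' : 1 <= n.+1 - b <= n by flia C.
  have [H1 H2 H3 H4 H5] := gP1 G Ha Hb' E.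
  have -> : n.+1 - b.-1 = (n.+1 - b).+1 by flia C.
  have -> : n.+1 - b.+1 = (n.+1 - b).-1 by flia C.
  split=> //; flia C.
- move=> i j Hi Him Hj Hjn Cj.
  have Hj' : 2 <= n.+1 - j by flia C.
  have Hjn' : n.+1 - j < n by flia C.
  have := gP2 G Hi Him Hj' Hjn' Cj.
  have -> : n.+1 - j.-1 = (n.+1 - j).+1 by flia C.
  have -> : n.+1 - j.+1 = (n.+1 - j).-1 by flia C.
  by case: (C i (n.+1 - j).-1); case: (C i (n.+1 - j).+1).
- move=> a b Ha Hb E.
  have Hb' : 1 <= n.+1 - b <= n by flia C.
  case: (gP3 G Ha Hb' E).
  + case/and3P => H1 H2 H3; apply: Or32.
    have -> : n.+1 - b.+2 = (n.+1 - b).-2 by flia C.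
    have -> : n.+1 - b.+1 = (n.+1 - b).-1 by flia C.
    rewrite H2 H3 andbT; flia C.
  + case/and3P => H1 H2 H3; apply: Or31.
    have -> : n.+1 - b.-2 = (n.+1 - b).+2 by flia C.
    have -> : n.+1 - b.-1 = (n.+1 - b).+1 by flia C.
    rewrite H2 H3 andbT; flia C.
  + case/and4P => H1 H2 H3 H4; apply: Or33.
    have -> : n.+1 - b.-1 = (n.+1 - b).+1 by flia C.
    have -> : n.+1 - b.+1 = (n.+1 - b).-1 by flia C.
    by rewrite H1 H2 H3 H4.
Qed.


Lemma Zpat C x c : (forall i, 1 <= i <= c -> C x i = (i %% 3 != 2)) -> Z C x c = c.+1 %/ 3.
Proof.
elim: c => [//|c IH] H.
rewrite ZS IH; last by move=> i Hi; apply: H; lia.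
rewrite H; last by lia.
rewrite negbK; lia.
Qed.

Lemma pattern m n C (G : Good m n C) x : x.+1 = m -> 1 <= x -> 2 < n -> CondL n C x ->
  C x 2 = false -> C x n.-1 = false ->
  forall j, 1 <= j <= n -> C x j = (j %% 3 != 2).
Proof.
move=> Hx Hx1 Hn HC E2 En j.
have Hxm : 1 <= x <= m by flia C.
elim: j {-2}j (leqnn j) => [|N IHN] j Hj Hjn; first flia C.
have IH : forall i, 1 <= i < j -> C x i = (i %% 3 != 2).
  move=> i Hi; apply: IHN; flia C.
case: j Hj Hjn IH => [|[|[|j]]] // Hj Hjn IH.
- by rewrite (col1 G) //; flia C.
have H1 : C x j.+1 = (j.+1 %% 3 != 2) by apply: IH; flia C.
have H2 : C x j.+2 = (j.+2 %% 3 != 2) by apply: IH; flia C.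
have [Hr|[Hr|Hr]] : j.+3 %% 3 = 0 \/ j.+3 %% 3 = 1 \/ j.+3 %% 3 = 2 by flia C.
- have E : C x j.+2 = false by rewrite H2; apply/negbF; flia C.
  have Hjn' : 1 <= j.+2 <= n by flia C.
  have [_ _ _ -> _] := gP1 G Hxm Hjn' E.
  symmetry; apply/eqP; flia C.
- have -> : (j.+3 %% 3 != 2) = true by apply/eqP; flia C.
  case E3: (C x j.+3) => //.
  have Hjn' : j.+3 <= n by flia C.
  have := HC j.+3 Hjn'.
  rewrite (ZSe E3) Zpat; first flia C.
  move=> i Hi; apply: IH; flia C.
- have -> : (j.+3 %% 3 != 2) = false by apply/negbF; flia C.
  have T2 : C x j.+2 = true by rewrite H2; apply/eqP; flia C.
  have T1 : C x j.+1 = true by rewrite H1; apply/eqP; flia C.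
  have Hjn' : j.+2 < n.
    case: (eqVneq j.+2 n.-1) => [H|H]; last flia C.
    by move: En; rewrite -H T2.
  have Hj2 : 2 <= j.+2 by [].
  have := win G Hx Hx1 Hj2 Hjn' T2; rewrite /= T1.
  by case: (C x j.+3).
Qed.

Unset Implicit Arguments.

Theorem mainTheorem13 (m n : nat) (C : config) :
  2 < m -> 2 < n -> ES m n C ->
  [/\ 3 %| n,
      (forall j, 1 <= j <= n -> C m j = true) &
      (forall j, 1 <= j <= n -> C m.-1 j = (j %% 3 != 2))].
Proof.
move=> Hm Hn HES.
have G := ES_Good HES.
have GR := Good_refl G.
have HC := CondL_all G Hm Hn.
have HCR := CondL_all GR Hm Hn.
have Em : m = (m - 3).+3 by flia C.
have En : n = (n - 3).+3 by flia C.
have B := bottom G Em En HC.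
have BR := bottom GR Em En HCR.
have Ex : (m - 3).+2 = m.-1 by flia C.
have Ey : (n - 3).+2 = n.-1 by flia C.
rewrite Ex Ey in B.
rewrite /refl Ex in BR.
have E2 : C m.-1 2 = false.
  by move: BR; have -> : n.+1 - (n - 3).+2 = 2 by flia C.
have Hx : m.-1.+1 = m by flia C.
have Hx1 : 1 <= m.-1 by flia C.
have Hxm : 1 <= m.-1 <= m by flia C.
have P := pattern G Hx Hx1 Hn (HC _ Hxm) E2 B.
split.
- have Hn1 : 1 <= n.-1 <= n by flia C.
  have := P _ Hn1; rewrite B => /esym /negbFE /eqP H; flia C.
- move=> j Hj; apply: (rowm G) => //; flia C.
- exact: P.
Qed.
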